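(* Let $G=(V,\mathcal{E})$ be the labeled graph associated with a tensor product (either the externally labeled graph $G^E(\pi)$ or the skeleton $G(\pi)$), and for an ordered partition $\Pi$ of $V$ let $\mathcal{E}(\pi,\Pi)=\{\theta(p(i,\Pi),p(j,\Pi)) : \theta(i,j)\in\mathcal{E}\}$. If $\Pi_1\prec\Pi_2$ are ordered partitions of $V$, then $\mathcal{E}(\pi,\Pi_1)>\mathcal{E}(\pi,\Pi_2)$.
   Context: Setting: a tensor product with factor set $S$ and slot set $\Omega$ is encoded by a coloring $\pi$ of $\Omega$ by index symbols (external symbols used once, internal symbols exactly twice, each symbol having a type). Its graph has vertex set $V=\Omega\cup\{0\}$ ($0$ an auxiliary vertex, omitted if there are no external indices) and labeled edges: $\{0,j\}$ for every slot $j$ carrying an external index, and $\{i,j\}$ for every pair of slots $i\ne j$ carrying the same internal index; a labeled edge $\theta(u,v)$ is the unordered pair $\{u,v\}$ with a label $\mathrm{type}[\mathrm{index}]$ (in $G^E(\pi)$ external edges carry the specific external symbol and internal edges a generic index; in $G(\pi)$ all edges carry a generic index). An ordered partition of $V$ is a sequence $\Pi=(\Pi_1,\dots,\Pi_r)$ of nonempty pairwise disjoint cells with union $V$. $\Pi\preceq\Pi'$ ($\Pi$ finer than $\Pi'$) if every cell of $\Pi'$ is a union of consecutive cells of $\Pi$; $\Pi\prec\Pi'$ means $\Pi\preceq\Pi'$ and $\Pi\neq\Pi'$. The position of $v\in\Pi_k$ is $p(v,\Pi)=1+\sum_{i=1}^{k-1}|\Pi_i|$. Labeled edge sets are compared lexicographically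 as sorted lists (with multiplicity) of labeled edges, each labeled edge $\theta(u,v)$ being compared lexicographically by its vertex pair (written with the smaller vertex first) and then by its label under a fixed total order of labels. *)

(* Defs.v *)
From mathcomp Require Import all_boot.
Set Implicit Arguments. Unset Strict Implicit. Unset Printing Implicit Defensive.

Inductive gkind := ExtLabeled | Skeleton.

Section TensorGraph.
Variables (Ty Idx : eqType) (typ : Idx -> Ty) (isext : Idx -> bool).

(* A label type[index]: the type, together with the specific index symbol
   (Some x) or the generic index (None). *)
Definition label := (Ty * option Idx)%type.

Definition elabel (k : gkind) (x : Idx) : label :=
  match k with
  | ExtLabeled => (typ x, if isext x then Some x else None)
  | Skeleton => (typ x, None)
  end.

(* Slots are 'I_n; vertex set lives in 'I_n.+1: ord0 is the auxiliary vertex 0,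
   slot j is the vertex j+1. *)
Definition slotv n (j : 'I_n) : 'I_n.+1 := lift ord0 j.

Definition tensor_ok n (pi : 'I_n -> Idx) : Prop :=
  forall j : 'I_n,
    count (pred1 (pi j)) [seq pi i | i <- enum 'I_n] = if isext (pi j) then 1 else 2.

Definition has_ext n (pi : 'I_n -> Idx) : bool := [exists j, isext (pi j)].

Definition Vset n (pi : 'I_n -> Idx) : {set 'I_n.+1} :=
  if has_ext pi then setT else [set~ ord0].

Definition graph_edges (k : gkind) n (pi : 'I_n -> Idx)
  : seq ('I_n.+1 * 'I_n.+1 * label) :=
  [seq (ord0, slotv j, elabel k (pi j)) | j <- [seq j <- enum 'I_n | isext (pi j)]]
  ++ [seq (slotv i, slotv (j : 'I_n), elabel k (pi i))
      | i : 'I_n <- enum 'I_n,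
        j : 'I_n <- [seq j : 'I_n <- enum 'I_n | (i < j) && (pi i == pi j) && ~~ isext (pi i)]].

End TensorGraph.

Definition is_opart (T : finType) (V : {set T}) (P : seq {set T}) : bool :=
  [&& all (fun A => A != set0) P,
      pairwise (fun A B : {set T} => [disjoint A & B]) P
    & \bigcup_(A <- P) A == V].

(* P is finer than Q: Q is obtained by merging consecutive runs of cells of P
   (in order). *)
Definition finer (T : finType) (P Q : seq {set T}) : Prop :=
  exists B : seq (seq {set T}),
    [/\ P = flatten B, all (fun b => b != [::]) B
      & Q = [seq \bigcup_(A <- b) A | b <- B]].

Definition strictly_finer (T : finType) (P Q : seq {set T}) : Prop :=
  finer P Q /\ P <> Q.

Definition pos (T : finType) (P : seq {set T}) (v : T) : nat :=
  1 + sumn [seq #|A| | A : {set T} <- take (find (fun A : {set T} => v \in A) P) P].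

Section Compare.
Variables (L : eqType) (ltL : rel L).

Definition strict_total_order : Prop :=
  [/\ irreflexive ltL, transitive ltL & forall x y, x != y -> ltL x y || ltL y x].

Definition lt_edge (e1 e2 : nat * nat * L) : bool :=
  let: (a1, b1, l1) := e1 in let: (a2, b2, l2) := e2 in
  (a1 < a2) || ((a1 == a2) && ((b1 < b2) || ((b1 == b2) && ltL l1 l2))).

Definition le_edge (e1 e2 : nat * nat * L) : bool := (e1 == e2) || lt_edge e1 e2.

Fixpoint lex_lt (s t : seq (nat * nat * L)) : bool :=
  match s, t with
  | [::], _ :: _ => true
  | x :: s', y :: t' => lt_edge x y || ((x == y) && lex_lt s' t')
  | _, _ => false
  end.

Definition relabel (T : finType) (P : seq {set T}) (e : T * T * L) : nat * nat * L :=
  let: (u, v, l) := e in (minn (pos P u) (pos P v), maxn (pos P u) (pos P v), l).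

Definition E_rel (T : finType) (E : seq (T * T * L)) (P : seq {set T}) :=
  sort le_edge [seq relabel P e | e <- E].

End Compare.

(* Main.v *)
Require Import Defs.
From mathcomp Require Import all_boot zify.
Set Implicit Arguments. Unset Strict Implicit. Unset Printing Implicit Defensive.

Section Ord.
Variables (L : eqType) (ltL : rel L) (HL : strict_total_order ltL).

Lemma ltE_irr x : lt_edge ltL x x = false.
Proof.
case: HL => irr _ _; case: x => [[a b] l] /=; by rewrite !ltnn !eqxx irr.
Qed.

Lemma ltE_trans : transitive (lt_edge ltL).
Proof.
case: HL => irr tr _ => [[[a2 b2] l2]] [[a1 b1] l1] [[a3 b3] l3] /=.
case/orP=> [h1|/andP[/eqP e1 /orP[h1|/andP[/eqP e2 h1]]]];
case/orP=> [h2|/andP[/eqP e3 /orP[h2|/andP[/eqP e4 h2]]]]; subst;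
  rewrite ?eqxx /=; try (apply/orP; left; lia).
all: try (apply/orP; right; apply/orP; left; lia).
by rewrite !ltnn /=; apply: tr h1 h2.
Qed.

Lemma leE_refl x : le_edge ltL x x.
Proof. by rewrite /le_edge eqxx. Qed.

Lemma leE_trans : transitive (le_edge ltL).
Proof.
move=> y x z; rewrite /le_edge => /orP[/eqP->//|h1] /orP[/eqP<-|h2].
  by rewrite h1 orbT.
by rewrite (ltE_trans h1 h2) orbT.
Qed.

Lemma ltE_total x y : x != y -> lt_edge ltL x y || lt_edge ltL y x.
Proof.
case: HL => irr tr tot; case: x y => [[a1 b1] l1] [[a2 b2] l2] ne /=.
case: (ltngtP a1 a2) => //= ea; subst.
case: (ltngtP b1 b2) => //= eb; subst.
rewrite ?eqxx /=; apply: tot; apply: contra ne => /eqP->; exact: eqxx.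
Qed.

Lemma leE_refl' x : le_edge ltL x x.
Proof. by rewrite /le_edge eqxx. Qed.

Lemma leE_total : total (le_edge ltL).
Proof.
move=> x y; case: (eqVneq x y) => [->|ne]; first by rewrite leE_refl.
rewrite /le_edge (negbTE ne) eq_sym (negbTE ne) /=; exact: ltE_total.
Qed.

Lemma leE_anti : antisymmetric (le_edge ltL).
Proof.
move=> x y; rewrite /le_edge => /andP[/orP[/eqP//|h1] /orP[/eqP//|h2]].
by have := ltE_trans h1 h2; rewrite ltE_irr.
Qed.

Notation le := (le_edge ltL).

Lemma sort_head (s : seq (nat*nat*L)) x xs :
  sort le s = x :: xs -> forall z, z \in s -> le x z.
Proof.
move=> hs z; rewrite -(mem_sort le) hs inE => /orP[/eqP->|hz]; first exact: leE_refl.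
have := sort_sorted leE_total s; rewrite hs /= (path_sortedE leE_trans) => /andP[/allP/(_ _ hz)]//.
Qed.

Lemma sort_cons_eq (s t : seq (nat*nat*L)) z :
  perm_eq s (z :: t) -> (forall w, w \in s -> le z w) -> sort le s = z :: sort le t.
Proof.
move=> hp hz; apply: (sorted_eq leE_trans leE_anti).
- exact: sort_sorted leE_total s.
- rewrite /= (path_sortedE leE_trans) sort_sorted ?andbT; last exact: leE_total.
  apply/allP=> w; rewrite mem_sort => wt; apply: hz; rewrite (perm_mem hp) inE wt orbT //.
- rewrite perm_sort (permPl hp) perm_cons perm_sym perm_sort //.
Qed.

Lemma lexC (T : eqType) (g f : T -> nat*nat*L) n (E : seq T) :
  size E = n ->
  (forall e, e \in E -> le (g e) (f e)) -> (exists2 e, e \in E & g e != f e) ->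
  lex_lt ltL (sort le (map g E)) (sort le (map f E)).
Proof.
elim: n E => [|n IH] E hsz hle [es hes hne]; first by case: E hsz hes hle.
case hy: (sort le (map f E)) => [|b ys].
  by move: (size_sort le (map f E)); rewrite hy size_map; case: E hes hle {hy hsz}.
case hx: (sort le (map g E)) => [|a xs].
  by move: (size_sort le (map g E)); rewrite hx size_map; case: E hes hle {hy hx hsz}.
have : b \in map f E by rewrite -(mem_sort le) hy inE eqxx.
case/mapP=> e0 he0 eb.
have ha0 : le a (g e0) by apply: (sort_head hx); apply: map_f.
have hab : le a b by rewrite eb; apply: leE_trans ha0 (hle _ he0).
case/splitPr: he0 hle hes hsz hx hy => E1 E2 hle hes hsz hx hy.
have hpE : perm_eq (E1 ++ e0 :: E2) (e0 :: (E1 ++ E2)).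
  by rewrite -cat1s perm_catCA.
case: (eqVneq a b) => [eab|neab]; last first.
  rewrite /=; move: hab; rewrite /le_edge (negbTE neab) /= => ->//.
subst b.
have ga : g e0 = a.
  by apply: leE_anti; rewrite ha0 eab hle // mem_cat inE eqxx orbT.
have hy' : sort le (map f (E1 ++ e0 :: E2)) = f e0 :: sort le (map f (E1 ++ E2)).
  apply: sort_cons_eq; first by rewrite -map_cons; apply: perm_map.
  move=> w hw; exact: (sort_head hy).
have hx' : sort le (map g (E1 ++ e0 :: E2)) = g e0 :: sort le (map g (E1 ++ E2)).
  apply: sort_cons_eq; first by rewrite -map_cons; apply: perm_map.
  move=> w hw; rewrite ga; exact: (sort_head hx).
move: hx hy; rewrite hx' hy' => -[_ <-] [<-] /=.
apply/orP; right; rewrite eab eqxx /=.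
apply: (IH (E1 ++ E2)).
- by move: hsz; rewrite !size_cat /= addnS => -[].
- by move=> e he; apply: hle; move: he; rewrite !mem_cat inE => /orP[]->; rewrite ?orbT.
- exists es => //; move: hes; rewrite !mem_cat inE => /orP[->//|/orP[/eqP ee|->]]; last by rewrite orbT.
  by move: hne; rewrite ee ga -eab eqxx.
Qed.
End Ord.

Section Pos.
Variable T : finType.

Definition bigU (b : seq {set T}) : {set T} := \bigcup_(A <- b) A.

Lemma in_bigU (v : T) (b : seq {set T}) : (v \in bigU b) = has (fun A : {set T} => v \in A) b.
Proof.
rewrite /bigU; elim: b => [|A b IH]; first by rewrite big_nil inE.
by rewrite big_cons inE IH.
Qed.

Lemma card_bigU (b : seq {set T}) : #|bigU b| <= sumn [seq #|A| | A : {set T} <- b].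
Proof.
rewrite /bigU; elim: b => [|A b IH]; first by rewrite big_nil cards0.
rewrite big_cons /=; apply: leq_trans (leq_card_setU _ _) _; rewrite leq_add2l //.
Qed.

Definition S (P : seq {set T}) v :=
  sumn [seq #|A| | A : {set T} <- take (find (fun A : {set T} => v \in A) P) P].

Lemma pos_S P v : pos P v = 1 + S P v.
Proof. by []. Qed.

Lemma S_cons (A : {set T}) P v : v \notin A -> S (A :: P) v = #|A| + S P v.
Proof. by move=> h; rewrite /S /= (negbTE h). Qed.

Lemma S_consin (A : {set T}) P v : v \in A -> S (A :: P) v = 0.
Proof. by move=> h; rewrite /S /= h. Qed.

Lemma S_cat (s : seq {set T}) P v : ~~ has (fun A : {set T} => v \in A) s ->
  S (s ++ P) v = sumn [seq #|A| | A : {set T} <- s] + S P v.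
Proof.
elim: s => [|A s IH] //= /norP[h1 h2].
by rewrite S_cons // IH // addnA.
Qed.

Lemma S_le (B : seq (seq {set T})) v : S [seq bigU b | b <- B] v <= S (flatten B) v.
Proof.
elim: B => [|b B IH] //=.
case: (boolP (v \in bigU b)) => h; first by rewrite S_consin.
rewrite S_cons // S_cat; last by rewrite -in_bigU.
by apply: leq_add => //; apply: card_bigU.
Qed.

Lemma bigU1 (A : {set T}) : bigU [:: A] = A.
Proof. by rewrite /bigU big_seq1. Qed.

Lemma S_lt (B : seq (seq {set T})) :
  all (fun b => b != [::]) B -> all (fun A => A != set0) (flatten B) ->
  pairwise (fun A B : {set T} => [disjoint A & B]) (flatten B) ->
  flatten B <> [seq bigU b | b <- B] ->
  exists v, has (fun A : {set T} => v \in A) (flatten B) /\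
    S [seq bigU b | b <- B] v < S (flatten B) v.
Proof.
elim: B => [|b B IH] //= /andP[bn Bn].
case: b bn => [|A [|A2 b']] // _.
- rewrite /= bigU1 => /andP[An Fn] /andP[dA pw] ne.
  have ne' : flatten B <> [seq bigU b | b <- B] by move=> e; apply: ne; rewrite e.
  case: (IH Bn Fn pw ne') => v [hv lt]; exists v; split; first by rewrite hv orbT.
  have vA : v \notin A.
    case/hasP: hv => C hC vC; move/allP/(_ _ hC): dA => /disjointFl dj.
    by rewrite dj.
  by rewrite !S_cons // ?bigU1 // ltn_add2l.
- rewrite /= => /and3P[A1n A2n _] /andP[/andP[dA12 _] _] _.
  case/set0Pn: A2n => v vA2; exists v; split; first by rewrite vA2 orbT.
  have vA1 : v \notin A by rewrite (disjointFl dA12).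
  rewrite S_consin; last by rewrite in_bigU /= vA2 orbT.
  by rewrite S_cons // ltn_addr // card_gt0.
Qed.
End Pos.

Lemma edge_at (Ty Idx : eqType) (typ : Idx -> Ty) (isext : Idx -> bool)
    (k : gkind) (n : nat) (pi : 'I_n -> Idx) (Hpi : tensor_ok isext pi) v :
  v \in Vset isext pi ->
  exists2 e, e \in graph_edges typ isext k pi & (e.1.1 = v \/ e.1.2 = v).
Proof.
have extE : forall j, isext (pi j) ->
    (ord0, slotv j, elabel typ isext k (pi j)) \in graph_edges typ isext k pi.
  move=> j hj; rewrite mem_cat; apply/orP; left; apply: map_f.
  by rewrite mem_filter hj mem_enum.
move=> hv; case: (unliftP ord0 v) hv => [j -> hv|-> hv]; last first.
  move: hv; rewrite /Vset; case: ifP => [/existsP[j hj] _|_] /=; last by rewrite !inE eqxx.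
  by exists (ord0, slotv j, elabel typ isext k (pi j)); [apply: extE | left].
case ej: (isext (pi j)).
  by exists (ord0, slotv j, elabel typ isext k (pi j)); [apply: extE | right].
case: (pickP (fun i => (i != j) && (pi i == pi j))) => [i /andP[nij /eqP pij]|none]; last first.
  have := Hpi j; rewrite ej count_map.
  rewrite (@eq_count _ _ (pred1 j)); last first.
    move=> i /=; case: (eqVneq i j) => [->|nij]; first by rewrite eqxx.
    by have := none i; rewrite /= nij /=.
  by rewrite count_uniq_mem ?enum_uniq // mem_enum.
have gE : forall a b : 'I_n, a < b -> pi a = pi b -> ~~ isext (pi a) ->
    (slotv a, slotv b, elabel typ isext k (pi a)) \in graph_edges typ isext k pi.
  move=> a b ab pab na; rewrite mem_cat; apply/orP; right.
  apply: (allpairs_f_dep (fun (i : 'I_n) (j : 'I_n) => (slotv i, slotv j, elabel typ isext k (pi i)))).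
    by rewrite mem_enum.
  by rewrite mem_filter ab -pab eqxx na mem_enum.
case: (ltngtP i j) => [ij|ji|eij].
- exists (slotv i, slotv j, elabel typ isext k (pi i)); last by right.
  by apply: gE => //; rewrite pij ej.
- exists (slotv j, slotv i, elabel typ isext k (pi j)); last by left.
  by apply: gE => //; rewrite ej.
- by move: nij; rewrite (ord_inj eij) eqxx.
Qed.

Lemma le_relabel (L : eqType) (ltL : rel L) (p2u p1u p2w p1w : nat) (l : L) :
  p2u <= p1u -> p2w <= p1w ->
  le_edge ltL (minn p2u p2w, maxn p2u p2w, l) (minn p1u p1w, maxn p1u p1w, l).
Proof.
move=> hu hw; rewrite /le_edge.
case: (eqVneq (minn p2u p2w, maxn p2u p2w, l) (minn p1u p1w, maxn p1u p1w, l)) => //= ne.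
case: (ltngtP (minn p2u p2w) (minn p1u p1w)) => //= em; first lia.
case: (ltngtP (maxn p2u p2w) (maxn p1u p1w)) => //= eM; first lia.
by move: ne; rewrite em eM eqxx.
Qed.

Lemma ne_relabel (L : eqType) (p2u p1u p2w p1w : nat) (l : L) :
  p2u <= p1u -> p2w <= p1w -> (p2u < p1u) || (p2w < p1w) ->
  (minn p2u p2w, maxn p2u p2w, l) != (minn p1u p1w, maxn p1u p1w, l).
Proof.
move=> hu hw hs; apply/eqP => -[e1 e2].
have := addn_min_max p2u p2w; have := addn_min_max p1u p1w; lia.
Qed.

Theorem theorem5 (Ty Idx : eqType) (typ : Idx -> Ty) (isext : Idx -> bool)
    (ltL : rel (label Ty Idx)) (HltL : strict_total_order ltL)
    (k : gkind) (n : nat) (pi : 'I_n -> Idx) (Hpi : tensor_ok isext pi)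
    (P1 P2 : seq {set 'I_n.+1}) :
  is_opart (Vset isext pi) P1 -> is_opart (Vset isext pi) P2 ->
  strictly_finer P1 P2 ->
  lex_lt ltL (E_rel ltL (graph_edges typ isext k pi) P2)
             (E_rel ltL (graph_edges typ isext k pi) P1).
Proof.
move=> /and3P[hn1 hpw1 hU1] _ [[B [e1 hB e2]] ne]; subst P1 P2.
have mono : forall v, pos [seq bigU b | b <- B] v <= pos (flatten B) v.
  by move=> v; rewrite !pos_S leq_add2l S_le.
apply: (lexC HltL (erefl _)).
  move=> [[u w] l] _ /=; exact: le_relabel.
have [v [hv hlt]] := S_lt hB hn1 hpw1 ne.
have vV : v \in Vset isext pi.
  by rewrite -(eqP hU1) -/(bigU (flatten B)) in_bigU.
have [[[a b] l] he hab] := edge_at typ k Hpi vV.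
exists (a, b, l) => //=; apply: ne_relabel => //.
have hltv : pos [seq bigU b | b <- B] v < pos (flatten B) v by rewrite !pos_S ltn_add2l.
by case: hab => /= ->; rewrite hltv ?orbT.
Qed.
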